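(* Let $n\ge 6$ be an integer and $k$ an integer with $(n+1)/2\le k\le n-3$. If $\gcd(n,k)=\gcd(n,k+1)=1$, then $\mathsf{BO}(k,\mathbb{Z}/n\mathbb{Z})=k+1$.
   Context: For a positive integer $k$, a set $\{g_1,\dots,g_k\}$ of $k$ distinct elements of a finite abelian group $G$ (written additively) is called $k$-barycentric if $\sum_{i=1}^k g_i = k\,g_j$ for some $1\le j\le k$. The $k$-th barycentric Olson constant $\mathsf{BO}(k,G)$ is the smallest integer $\ell$ such that every subset $A\subseteq G$ with $|A|\ge \ell$ contains a $k$-barycentric subset (so that always $\mathsf{BO}(k,G)\le |G|+1$). *)

(* Defs.v *)
From HB Require Import structures.
From mathcomp Require Import all_boot all_order all_algebra.
Set Implicit Arguments. Unset Strict Implicit. Unset Printing Implicit Defensive.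
Import GRing.Theory.

Definition barycentric (G : finZmodType) (k : nat) (B : {set G}) : bool :=
  (#|B| == k) && [exists j in B, (\sum_(g in B) g)%R == (j *+ k)%R].

Definition BO_prop (G : finZmodType) (k l : nat) : bool :=
  [forall A : {set G}, (l <= #|A|) ==> [exists B : {set G}, (B \subset A) && barycentric k B]].

(* BO(k,G): the smallest l with BO_prop; l = #|G|+1 always works (vacuously),
   so the search over 0..#|G|+1 always succeeds. *)
Definition BO (G : finZmodType) (k : nat) : nat :=
  find (BO_prop G k) (iota 0 (#|G|).+2).

Lemma BO_prop_top (G : finZmodType) (k : nat) : BO_prop G k (#|G|).+1.
Proof.
apply/forallP=> A; apply/implyP=> H.
by move: (max_card A); rewrite leqNgt H.
Qed.

(* Main.v *)
Require Import Defs.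
From mathcomp Require Import all_boot all_order all_algebra.
From mathcomp Require Import zify.
Import GRing.Theory.
Local Open Scope ring_scope.
Lemma mulk0 (m k : nat) (x : 'Z_m.+2) : coprime m.+2 k -> x *+ k = 0 -> x = 0.
Proof.
move=> cop /(congr1 val). rewrite -mulr_natr /= val_Zp_nat //.
move=> /eqP. rewrite -/(dvdn _ _) Gauss_dvdl; last by rewrite coprime_modr.
case: x => [[|i] Hi] /=; first by move=> _; apply: val_inj.
by move=> /(dvdn_leq (ltn0Sn i)); rewrite leqNgt Hi.
Qed.

Lemma lower (m k : nat) (t : seq nat) : coprime m.+2 k -> uniq t ->
  all (fun i => 0 < i < m.+2)%N t -> (m.+2 %| sumn t)%N -> size t = k ->
  forall l, (l <= k)%N -> ~~ BO_prop 'Z_m.+2 k l.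
Proof.
move=> ck ut allt dvt st l lk.
pose f := fun i : nat => (i%:R : 'Z_m.+2).
pose s := map f t.
have fv : forall i, val (f i) = (i %% m.+2)%N by move=> i; rewrite /f /= val_Zp_nat.
have us : uniq s.
  rewrite map_inj_in_uniq // => i j /(allP allt) hi /(allP allt) hj /(congr1 val).
  by rewrite !fv !modn_small //; lia.
pose A := [set x in s].
have cA : #|A| = k by rewrite cardsE; move/card_uniqP: us; rewrite size_map st.
have sA : \sum_(g in A) g = 0.
  rewrite (eq_bigl (mem s)); last by move=> x; rewrite inE.
  rewrite -big_uniq // big_map -natr_sum -sumnE.
  by apply: val_inj; rewrite /= val_Zp_nat // (eqP dvt).
apply/forallPn; exists A; rewrite negb_imply cA lk /=.
apply/existsPn => B; apply/negP => /andP [sub /andP [/eqP cB /existsP [j /andP [jB /eqP hs]]]].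
have eBA : B = A by apply/eqP; rewrite eqEcard sub /=; apply/eq_leq; rewrite cB -cA.
move: hs; rewrite eBA sA => /esym /(@mulk0 m k _ ck) j0.
move: jB; rewrite eBA inE j0 => /mapP [i /(allP allt) hi /(congr1 val)].
by rewrite fv /= modn_small //; lia.
Qed.
Lemma mulk_inj (m k : nat) (x y : 'Z_m.+2) : coprime m.+2 k -> x *+ k = y *+ k -> x = y.
Proof.
move=> cop /eqP; rewrite -subr_eq0 -mulrnBl => /eqP /(@mulk0 m k _ cop) /eqP.
by rewrite subr_eq0 => /eqP.
Qed.
Lemma upper (m k : nat) (C : {set 'Z_m.+2}) : coprime m.+2 k -> coprime m.+2 k.+1 ->
  #|C| = k.+1 -> (m.+2 <= k.*2)%N ->
  exists y b, [/\ y \in C, b \in C, b != y & (\sum_(g in C) g) - b *+ k = y].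
Proof.
move=> ck ck1 cC nk.
set s := \sum_(g in C) g.
pose f := fun b : 'Z_m.+2 => s - b *+ k.
pose F := [set b | f b == b].
have F1 : (#|F| <= 1)%N.
  apply/card_le1_eqP => x y; rewrite !inE /f => /eqP hx /eqP hy.
  apply: (@mulk_inj m k.+1 _ _ ck1).
  rewrite !mulrS.
  have -> : x + x *+ k = s by rewrite -{1}hx subrK.
  by rewrite -{1}hy subrK.
pose C' := C :\: F.
have hC' : (k <= #|C'|)%N.
  rewrite /C' cardsD cC.
  have : (#|C :&: F| <= 1)%N by apply: leq_trans F1; apply: subset_leq_card; apply: subsetIr.
  by move=> h; apply: leq_trans (leq_sub2l k.+1 h); rewrite subn1.
have finj : injective f.
  by move=> a b; rewrite /f => /addrI /oppr_inj /(@mulk_inj m k _ _ ck).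
have cI : (0 < #|f @: C' :&: C|)%N.
  have := cardsUI (f @: C') C.
  rewrite card_imset // cC.
  have : (#|f @: C' :|: C| <= m.+2)%N.
    by apply: leq_trans (max_card _) _; rewrite card_ord.
  move: hC' nk; rewrite -addnn; move: #|C'| (#|_ :|: _|) (#|_ :&: _|); lia.
move: cI; rewrite card_gt0 => /set0Pn [y]; rewrite inE => /andP [/imsetP [b bC' ->] fbC].
move: bC'; rewrite /C' !inE /f => /andP [nfb bC].
exists (s - b *+ k), b; split => //.
by rewrite eq_sym.
Qed.

Local Close Scope ring_scope.

Lemma sum_iota2 a b c : (sumn (iota a c) + sumn (iota b c) + c = c * (a + b + c))%N.
Proof.
elim: c a b => [|c IH] a b //=.
have := IH a.+1 b.+1. nia.
Qed.

Lemma find_iota_k (P : pred nat) N k : (k < N)%N -> P k ->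
  (forall i, (i < k)%N -> ~~ P i) -> find P (iota 0 N) = k.
Proof.
move=> kN Pk H.
have -> : N = (k + (N - k).-1.+1)%N by lia.
rewrite iotaD find_cat.
have -> : has P (iota 0 k) = false.
  apply/negbTE/hasPn => i; rewrite mem_iota => /andP [_ hi]; exact: H.
by rewrite size_iota /= add0n Pk addn0.
Qed.

Lemma lower_list (n k : nat) : (6 <= n)%N -> (n.+1 <= k.*2)%N -> (k <= n - 3)%N -> odd n ->
  exists t : seq nat, [/\ uniq t, all (fun i => 0 < i < n)%N t, (n %| sumn t)%N & size t = k].
Proof.
move=> h6 hk1 hk2 on.
case ok: (odd k).
- have [h eh] : exists h, k = h.*2.+1 by exists k./2; rewrite -[LHS]odd_double_half ok.
  have hn : (h.*2 + 5 <= n)%N.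
    have : n != k.+3 by apply/negP => /eqP e; move: on; rewrite e /= ok.
    lia.
  exists ([:: 1; 2; n - 3] ++ iota 4 h.-1 ++ iota (n - h - 2) h.-1)%N; split.
  + rewrite !cat_uniq !iota_uniq /= !inE !andbT.
    apply/and3P; split.
    * lia.
    * rewrite has_cat negb_or; apply/andP; split;
        apply/hasPn => x; rewrite mem_iota !inE; lia.
    * apply/hasPn => x; rewrite mem_iota mem_iota; lia.
  + rewrite !all_cat /=; apply/and3P; split.
    * rewrite andbT; apply/and3P; split; lia.
    * apply/allP => x; rewrite mem_iota; lia.
    * apply/allP => x; rewrite mem_iota; lia.
  + rewrite !sumn_cat /=.
    have := sum_iota2 4 (n - h - 2) h.-1.
    move=> e; apply/dvdnP; exists h; lia.
  + rewrite !size_cat !size_iota /=; lia.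
- have [h eh] : exists h, k = h.*2 by exists k./2; rewrite -[LHS]odd_double_half ok.
  exists (iota 1 h ++ iota (n - h) h); split.
  + rewrite cat_uniq !iota_uniq /= andbT.
    apply/hasPn => x; rewrite mem_iota mem_iota; lia.
  + rewrite all_cat; apply/andP; split; apply/allP => x; rewrite mem_iota; lia.
  + have := sum_iota2 1 (n - h) h.
    rewrite sumn_cat => e; apply/dvdnP; exists h; lia.
  + rewrite size_cat !size_iota; lia.
Qed.

Theorem mainTheorem5 (n k : nat) :
  6 <= n -> n.+1 <= k.*2 -> k <= n - 3 ->
  gcdn n k = 1 -> gcdn n k.+1 = 1 ->
  BO ('Z_n)%type k = k.+1.
Proof.
move=> h6 hk1 hk2 g1 g2.
case: n h6 hk1 hk2 g1 g2 => [|[|m]] // h6 hk1 hk2 g1 g2.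
have ck : coprime m.+2 k by rewrite /coprime g1.
have ck1 : coprime m.+2 k.+1 by rewrite /coprime g2.
have on : odd m.+2.
  case ev0: (odd m.+2) => //; have ev := negbT ev0.
  case ok: (odd k).
  - have : 2 %| gcdn m.+2 k.+1 by rewrite dvdn_gcd !dvdn2 ev /= ok.
    by rewrite g2.
  - have : 2 %| gcdn m.+2 k by rewrite dvdn_gcd !dvdn2 ev /= ok.
    by rewrite g1.
rewrite /BO; apply: find_iota_k.
- rewrite card_ord (_ : Zp_trunc m.+2 = m) //; lia.
- apply/forallP => A; apply/implyP => hA.
  pose C := [set x in take k.+1 (enum A)].
  have uC : uniq (take k.+1 (enum A)) := take_uniq _ (enum_uniq _).
  have cC : #|C| = k.+1.
    by rewrite cardsE; move/card_uniqP: uC => ->; rewrite size_takel // -cardE.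
  have sCA : C \subset A.
    by apply/subsetP => x; rewrite inE => /mem_take; rewrite mem_enum.
  have [y [b [yC bC nby hy]]] := @upper m k C ck ck1 cC ltac:(lia).
  apply/existsP; exists (C :\ y); apply/andP; split.
    by apply: subset_trans sCA; apply: subD1set.
  apply/andP; split.
    have := cardsD1 y C; rewrite yC cC => e; apply/eqP.
    move: e; rewrite add1n => -[] ->. done.
  apply/existsP; exists b; apply/andP; split; first by rewrite in_setD1 nby bC.
  apply/eqP.
  have e : (\sum_(g in C) g = y + \sum_(g in C :\ y) g)%R.
    rewrite (bigD1 y yC) /=; congr (_ + _)%R; apply: eq_bigl => g; by rewrite in_setD1 andbC.
  apply: (@addrI _ y); rewrite -e -hy subrK //.
- move=> i hi.
  have [t [ut alt dt st]] := @lower_list m.+2 k h6 hk1 hk2 on.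
  exact: (@lower m k t ck ut alt dt st i hi).
Qed.
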